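(* For all $\lambda,\mu\in\Lambda(n,r)$ and every nonzero $a\in 1_\lambda\hat S(n,r)1_\mu$, one has $a\,\rho(a)\neq0$ (an element of $1_\lambda\hat S(n,r)1_\lambda$) and $\rho(a)\,a\neq 0$ (an element of $1_\mu\hat S(n,r)1_\mu$).
   Context: Fix integers $n\ge3$, $r\ge1$; indices are read modulo $n$. $\hat U=\hat{\mathbf U}_q(\hat{\mathfrak{gl}}_n)$ is the associative unital $\mathbb{Q}(q)$-algebra generated by $R^{\pm1}$, $K_i^{\pm1}$, $E_i$, $E_{-i}$ ($1\le i\le n$) subject to: the $K_i^{\pm1}$ pairwise commute and $K_iK_i^{-1}=K_i^{-1}K_i=1$; $E_iE_{-j}-E_{-j}E_i=\delta_{ij}\frac{K_iK_{i+1}^{-1}-K_i^{-1}K_{i+1}}{q-q^{-1}}$; $K_iE_{\pm j}=q^{\pm(\delta_{i,j}-\delta_{i,j+1})}E_{\pm j}K_i$; for $\epsilon,\delta\in\{1,-1\}$, $E_{\epsilon i}^2E_{\epsilon(i+\delta)}-(q+q^{-1})E_{\epsilon i}E_{\epsilon(i+\delta)}E_{\epsilon i}+E_{\epsilon(i+\delta)}E_{\epsilon i}^2=0$; $E_{\epsilon i}E_{\epsilon j}=E_{\epsilon j}E_{\epsilon i}$ if $j\not\equiv i\pm1\pmod n$; $RR^{-1}=R^{-1}R=1$; $RXR^{-1}=X'$ for $(X,X')\in\{(E_i,E_{i+1}),(E_{-i},E_{-(i+1)}),(K_i^{-1},K_{i+1}^{-1})\}$. The coproduct $\Delta$ is the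 algebra map with $\Delta(E_i)=E_i\otimes K_iK_{i+1}^{-1}+1\otimes E_i$, $\Delta(E_{-i})=K_i^{-1}K_{i+1}\otimes E_{-i}+E_{-i}\otimes1$, $\Delta(K_i^{\pm1})=K_i^{\pm1}\otimes K_i^{\pm1}$, $\Delta(R^{\pm1})=R^{\pm1}\otimes R^{\pm1}$. $\rho$ is the $\mathbb{Q}(q)$-linear algebra anti-involution of $\hat U$ with $\rho(E_i)=qK_iK_{i+1}^{-1}E_{-i}$, $\rho(E_{-i})=qK_i^{-1}K_{i+1}E_i$, $\rho(K_i)=K_i$, $\rho(R)=R^{-1}$. $V$ is the $\mathbb{Q}(q)$-vector space with basis $\{e_t\}_{t\in\mathbb{Z}}$, a $\hat U$-module via: $E_ie_{t+1}=e_t$ if $i\equiv t\pmod n$ and $0$ otherwise; $E_{-i}e_t=e_{t+1}$ if $i\equiv t\pmod n$ and $0$ otherwise; $K_i^{\pm1}e_t=q^{\pm1}e_t$ if $i\equiv t\pmod n$ and $e_t$ otherwise; $R^{\pm1}e_t=e_{t\pm1}$; $\hat U$ acts on $V^{\otimes r}$ via the iterated coproduct, giving $\psi_{n,r}\colon\hat U\to\mathrm{End}_{\mathbb{Q}(q)}(V^{\otimes r})$. The affine $q$-Schur algebra is $\hat S(n,r):=\psi_{n,r}(\hat U)$ (by affine Schur–Weyl duality this is the centralizer of the extended affine Hecke algebra action on $V^{\otimes r}$). The bilinear form on $V^{\otimes r}$ is $\langle e_{s_1}\otimes\cdots\otimes e_{s_r},e_{t_1}\otimes\cdots\otimes e_{t_r}\rangle=\prod_j\delta_{s_jt_j}$;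 one has $\langle Xv,w\rangle=\langle v,\rho(X)w\rangle$, so $\rho$ induces a well-defined anti-involution of $\hat S(n,r)$, again denoted $\rho$, by $\rho(\psi_{n,r}(X))=\psi_{n,r}(\rho(X))$. $\Lambda(n,r)=\{\lambda\in\mathbb{N}^n:\sum_i\lambda_i=r\}$; for $\lambda\in\Lambda(n,r)$, $1_\lambda\in\hat S(n,r)$ is the projection of $V^{\otimes r}$ onto the span of those $e_{t_1}\otimes\cdots\otimes e_{t_r}$ with $\#\{j: t_j\equiv i\pmod n\}=\lambda_i$ for all $i$ (so $\rho(1_\lambda)=1_\lambda$ and $\sum_{\lambda}1_\lambda=1$). *)

(* Defs.v *)
From HB Require Import structures.
From mathcomp Require Import all_boot all_order all_algebra fraction.
Set Implicit Arguments. Unset Strict Implicit. Unset Printing Implicit Defensive.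
Import Order.TTheory GRing.Theory Num.Theory.
Local Open Scope ring_scope.

Definition F : fieldType := {fraction {poly rat}}.
Definition q : F := FracField.tofrac 'X.

(* Generators of \hat U = U_q(\hat gl_n).  An index i : 'I_n stands for the
   generator index i+1 in {1,...,n}. gE i = E_{i+1}, gF i = E_{-(i+1)}. *)
Inductive gen (n : nat) : Type :=
 | gR | gRinv | gK of 'I_n | gKinv of 'I_n | gE of 'I_n | gF of 'I_n.
Arguments gR {n}. Arguments gRinv {n}.

(* Elements of \hat U are represented by (non-commutative polynomial)
   expressions in the generators; every element of \hat U is of this form. *)
Inductive term (n : nat) : Type :=
 | tGen of gen n
 | tOne
 | tAdd of term n & term n
 | tScale of F & term n
 | tMul of term n & term n.
Arguments tOne {n}.

Definition rho_gen n (g : gen n) : term n :=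
  match g with
  | gR => tGen gRinv
  | gRinv => tGen gR
  | gK i => tGen (gK i)
  | gKinv i => tGen (gKinv i)
  | gE i => tMul (tScale q (tMul (tGen (gK i)) (tGen (gKinv (ordS i))))) (tGen (gF i))
  | gF i => tMul (tScale q (tMul (tGen (gKinv i)) (tGen (gK (ordS i))))) (tGen (gE i))
  end.

Fixpoint rho n (x : term n) : term n :=
  match x with
  | tGen g => rho_gen g
  | tOne => tOne
  | tAdd a b => tAdd (rho a) (rho b)
  | tScale c a => tScale c (rho a)
  | tMul a b => tMul (rho b) (rho a)
  end.

Section Action.
Variables n r : nat.

(* Basis of V^{\otimes r}: e_{t_1} (x) ... (x) e_{t_r}, t : 'I_r -> int. *)
Definition tens := {ffun 'I_r -> int}.
(* A vector of V^{\otimes r}: a finite formal linear combination of basis tensors. *)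
Definition vec := seq (F * tens).
(* A linear endomorphism of V^{\otimes r}, given by its values on the basis. *)
Definition op := tens -> vec.

Definition coef (v : vec) (s : tens) : F := \sum_(p <- v | p.2 == s) p.1.
Definition op_nonzero (A : op) : Prop := exists t s, coef (A t) s != 0.

Definition vscale (c : F) (v : vec) : vec := [seq (c * p.1, p.2) | p <- v].
Definition apply (A : op) (v : vec) : vec := flatten [seq vscale p.1 (A p.2) | p <- v].
Definition opcomp (A B : op) : op := fun t => apply A (B t).

Definition cong (s i : int) : bool := ((s - i) %% n)%Z == 0.
Definition idx (i : 'I_n) : int := (i.+1)%:Z.

Definition upd (t : tens) (j : 'I_r) (v : int) : tens :=
  [ffun k => if k == j then v else t k].
Definition shift (t : tens) (d : int) : tens := [ffun k => t k + d].

(* exponent of q in K_i K_{i+1}^{-1} e_s *)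
Definition kexp (i s : int) : int := (cong s i : nat)%:Z - (cong s (i + 1) : nat)%:Z.

(* Action via the iterated coproduct:
   Delta^(r)(E_i)    = sum_j 1^{(j-1)} (x) E_i (x) (K_i K_{i+1}^{-1})^{(r-j)}
   Delta^(r)(E_{-i}) = sum_j (K_i^{-1} K_{i+1})^{(j-1)} (x) E_{-i} (x) 1^{(r-j)}
   Delta^(r)(K_i^{+-1}) = (K_i^{+-1})^{(r)},  Delta^(r)(R^{+-1}) = (R^{+-1})^{(r)}. *)
Definition gen_act (g : gen n) : op := fun t =>
  match g with
  | gR => [:: (1, shift t 1)]
  | gRinv => [:: (1, shift t (-1))]
  | gK i => [:: (\prod_(k < r) q ^ ((cong (t k) (idx i) : nat)%:Z), t)]
  | gKinv i => [:: (\prod_(k < r) q ^ (- (cong (t k) (idx i) : nat)%:Z), t)]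
  | gE i => [seq (\prod_(k < r | (j < k)%N) q ^ (kexp (idx i) (t k)), upd t j (t j - 1))
             | j : 'I_r <- enum 'I_r & cong (t j - 1) (idx i)]
  | gF i => [seq (\prod_(k < r | (k < j)%N) q ^ (- kexp (idx i) (t k)), upd t j (t j + 1))
             | j : 'I_r <- enum 'I_r & cong (t j) (idx i)]
  end.

Fixpoint psi (x : term n) : op :=
  match x with
  | tGen g => gen_act g
  | tOne => fun t => [:: (1, t)]
  | tAdd a b => fun t => psi a t ++ psi b t
  | tScale c a => fun t => vscale c (psi a t)
  | tMul a b => opcomp (psi a) (psi b)
  end.

Definition wt (t : tens) (i : 'I_n) : nat := \sum_(j < r) (cong (t j) (idx i) : nat).

Definition one_w (lam : 'I_n -> nat) : op := fun t =>
  if [forall i, wt t i == lam i] then [:: (1, t)] else [::].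

(* 1_lam psi(x) 1_mu : the general element of 1_lam \hat S(n,r) 1_mu *)
Definition cut (lam : 'I_n -> nat) (x : term n) (mu : 'I_n -> nat) : op :=
  opcomp (one_w lam) (opcomp (psi x) (one_w mu)).

End Action.

(* Main.v *)
Require Import Defs.
From HB Require Import structures.
From mathcomp Require Import all_boot all_order all_algebra fraction generic_quotient.
From mathcomp Require Import ring lra zify.
Set Implicit Arguments. Unset Strict Implicit. Unset Printing Implicit Defensive.
Import Order.TTheory GRing.Theory Num.Theory.
Local Open Scope ring_scope.
Local Notation "x %:F" := (@FracField.tofrac _ x) (format "x %:F").


Lemma frac_decomp (R: idomainType) (x : {fraction R}) :
  exists a b, b != 0 /\ x * b%:F = a%:F.
Proof.
elim/quotW: x => y.
exists (y.1), (y.2); split; first exact: denom_ratioP.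
unlock tofrac. rewrite !piE. apply/eqP; rewrite FracField.equivf_def.
rewrite /= /FracField.mulf /= !numden_Ratio ?mulf_neq0 ?oner_neq0 ?denom_ratioP //.
by rewrite !mulr1 mulrC.
Qed.

Lemma poly_sqsum (ps : seq {poly rat}) :
  \sum_(p <- ps) p * p = 0 -> all (fun p => p == 0) ps.
Proof.
move=> H; apply/allP => p pin.
case: (eqVneq p 0) => // pn0.
have rt : forall x : rat, p.[x] = 0.
  move=> x; have := congr1 (fun P => P.[x]) H.
  rewrite horner_sum horner0 => /eqP.
  rewrite psumr_eq0; last by move=> i _; rewrite hornerM -expr2 sqr_ge0.
  move/allP/(_ p pin); rewrite hornerM mulf_eq0 orbb => /eqP //.
have := max_poly_roots pn0 (rs := [seq (k%:R : rat) | k <- iota 0 (size p)]).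
rewrite size_map size_iota ltnn; apply => //.
  by apply/allP => y /mapP [k _ ->]; rewrite /root rt.
rewrite map_inj_uniq ?iota_uniq // => a b /eqP; rewrite eqr_nat => /eqP //.
Qed.

Lemma F_sqsum (l : seq F) :
  \sum_(c <- l) c * c = 0 -> all (fun c => c == 0) l.
Proof.
have [D [Dn0 [ps Hps]]] : exists D : {poly rat}, D != 0 /\
    exists ps, map (fun c => c * D%:F) l = map (fun p : {poly rat} => p%:F) ps.
  elim: l => [|c l [D [Dn0 [ps Hps]]]].
    by exists 1; split; [exact: oner_neq0 | exists [::]].
  have [a [b [bn0 Hab]]] := frac_decomp (c : {fraction {poly rat}}).
  exists (D * b); split; first by rewrite mulf_neq0.
  exists (a * D :: map (fun p => p * b) ps) => /=.
  congr cons; first by rewrite !tofracM -Hab; ring.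
  rewrite -map_comp.
  transitivity (map (fun x => x * b%:F) (map (fun c => c * D%:F) l)).
    by rewrite -map_comp; apply: eq_map => y /=; rewrite tofracM mulrA.
  by rewrite Hps -map_comp; apply: eq_map => y /=; rewrite tofracM.
move=> H.
have H2 : (\sum_(p <- ps) p * p)%:F = 0 :> F.
  rewrite (big_morph _ (@tofracD _) (@tofrac0 _)).
  transitivity (\sum_(y <- map (fun p : {poly rat} => p%:F) ps) y * y).
    rewrite big_map; elim: (ps) => [|p s IH]; rewrite ?big_nil // !big_cons IH tofracM //.
  rewrite -Hps big_map.
  transitivity (D%:F * D%:F * \sum_(c <- l) c * c); last by rewrite H mulr0.
  by rewrite mulr_sumr; apply: eq_bigr => c _; ring.
move/eqP: H2; rewrite tofrac_eq0 => /eqP /poly_sqsum Hall.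
apply/allP => c cin.
have : c * D%:F \in map (fun p : {poly rat} => p%:F) ps by rewrite -Hps; apply: map_f.
case/mapP => p pin.
move/allP: Hall => /(_ p pin) /eqP -> /eqP.
rewrite rmorph0 mulf_eq0 tofrac_eq0 (negbTE Dn0) orbF //.
Qed.

Section Vec.
Lemma coef_nil r (s : tens r) : coef [::] s = 0.
Proof. by rewrite /coef big_nil. Qed.

Lemma coef_cons r (p : F * tens r) v s :
  coef (p :: v) s = (if p.2 == s then p.1 else 0) + coef v s.
Proof. by rewrite /coef big_cons; case: (p.2 == s); rewrite ?add0r. Qed.

Lemma coef_cat r (v w : vec r) s : coef (v ++ w) s = coef v s + coef w s.
Proof. by rewrite /coef big_cat. Qed.

Lemma coef_scale r c (v : vec r) s : coef (vscale c v) s = c * coef v s.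
Proof. by rewrite /coef /vscale big_map mulr_sumr. Qed.

Lemma coef_apply r (A : op r) (v : vec r) s :
  coef (apply A v) s = \sum_(p <- v) p.1 * coef (A p.2) s.
Proof.
elim: v => [|p v IH]; first by rewrite big_nil /apply /= coef_nil.
by rewrite big_cons -IH /apply /= coef_cat coef_scale.
Qed.

Lemma pair_sym r (v w : vec r) :
  \sum_(p <- v) p.1 * coef w p.2 = \sum_(p <- w) p.1 * coef v p.2.
Proof.
rewrite /coef.
transitivity (\sum_(p <- v) \sum_(p' <- w) (if p'.2 == p.2 then p.1 * p'.1 else 0)).
  apply: eq_bigr => p _; rewrite mulr_sumr big_mkcond /=.
  by [].
rewrite exchange_big /=; apply: eq_bigr => p' _.
rewrite mulr_sumr [RHS]big_mkcond /=; apply: eq_bigr => p _.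
case: (p'.2 =P p.2) => [->|ne]; first by rewrite eqxx mulrC.
by case: (p.2 =P p'.2) => // e; case: ne.
Qed.

Definition istr r (A B : op r) := forall t s, coef (B t) s = coef (A s) t.

Lemma istr_comp r (A B C D : op r) :
  istr A B -> istr C D -> istr (opcomp A C) (opcomp D B).
Proof.
move=> hAB hCD t s; rewrite /opcomp !coef_apply.
transitivity (\sum_(p <- B t) p.1 * coef (C s) p.2).
  by apply: eq_bigr => p _; rewrite hCD.
rewrite pair_sym; apply: eq_bigr => p _; by rewrite hAB.
Qed.

Lemma coef_single r c (u s : tens r) : coef [:: (c, u)] s = if u == s then c else 0.
Proof. by rewrite coef_cons coef_nil addr0. Qed.

Lemma istr_one_w n r lam : istr (@one_w n r lam) (@one_w n r lam).
Proof.
move=> t s; rewrite /one_w.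
case: (eqVneq t s) => [->//|ne].
case: ifP => _; case: ifP => _; have ne2 : s != t by apply/eqP => e; rewrite e eqxx in ne.
all: by rewrite ?coef_nil ?coef_single ?(negbTE ne) ?(negbTE ne2).
Qed.

Lemma sum_nonzero r (v : vec r) s : coef v s != 0 ->
  \sum_(p <- v) p.1 * coef v p.2 != 0.
Proof.
move=> hs.
set U := undup (map snd v).
have E : \sum_(p <- v) p.1 * coef v p.2 = \sum_(u <- U) coef v u * coef v u.
  transitivity (\sum_(p <- v) \sum_(u <- U) (if p.2 == u then p.1 * coef v u else 0)).
    apply: eq_big_seq => p pin.
    have pU : p.2 \in U by rewrite mem_undup; apply: map_f.
    rewrite [RHS](bigD1_seq p.2) ?undup_uniq //= eqxx big1_seq ?addr0 // => u /andP [ne _].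
    by case: (p.2 =P u) => // e; rewrite e eqxx in ne.
  rewrite exchange_big /=; apply: eq_bigr => u _.
  rewrite /coef mulr_suml [RHS]big_mkcond /=; apply: eq_bigr => p _.
  by case: ifP.
rewrite E; apply/negP => /eqP H.
have := F_sqsum (l := map (coef v) U).
rewrite big_map => /(_ H) /allP.
have sU : s \in U.
  rewrite mem_undup; apply/negPn/negP => nin; move: hs.
  rewrite /coef big_seq_cond big1 ?eqxx // => p /andP [pin /eqP e].
  by case/negP: nin; rewrite -e; apply: map_f.
by move/(_ (coef v s) (map_f _ sU))/eqP; apply/eqP.
Qed.
End Vec.
Lemma diag_sum r (v : vec r) s (d : tens r -> F) :
  \sum_(p <- v) p.1 * coef [:: (d p.2, p.2)] s = d s * coef v s.
Proof.
rewrite /coef mulr_sumr [RHS]big_mkcond /=; apply: eq_bigr => p _.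
rewrite big_cons big_nil /=.
by case: (p.2 =P s) => [->|_]; rewrite ?addr0 ?mulr0 // mulrC.
Qed.

Lemma qnz : q != 0.
Proof. by rewrite /q tofrac_eq0 polyX_eq0. Qed.

Lemma prodq r (P : pred 'I_r) (a : 'I_r -> int) :
  \prod_(k < r | P k) q ^ a k = q ^ (\sum_(k < r | P k) a k).
Proof.
symmetry; apply: (big_morph (fun z => q ^ z)) => [x y|]; first exact: expfzDr qnz.
exact: expr0z.
Qed.

Lemma coef_gF n r (i : 'I_n) (t s : tens r) :
  coef (gen_act (gF i) t) s =
  \sum_(j <- enum 'I_r | cong n (t j) (idx i) && (upd t j (t j + 1) == s))
     \prod_(k < r | (k < j)%N) q ^ (- kexp n (idx i) (t k)).
Proof. by rewrite /coef /= big_map big_filter_cond. Qed.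

Lemma coef_gE n r (i : 'I_n) (t s : tens r) :
  coef (gen_act (gE i) t) s =
  \sum_(j <- enum 'I_r | cong n (t j - 1) (idx i) && (upd t j (t j - 1) == s))
     \prod_(k < r | (j < k)%N) q ^ (kexp n (idx i) (t k)).
Proof. by rewrite /coef /= big_map big_filter_cond. Qed.

Lemma cong_ordS n (i : 'I_n) (s : int) : cong n s (idx (ordS i)) = cong n s (idx i + 1).
Proof.
rewrite /cong /idx /=.
have e := congr1 Posz (divn_eq i.+1 n); rewrite PoszD PoszM in e.
move: e; set a := (i.+1 %/ n)%N; set b := (i.+1 %% n)%N => e.
have -> : s - (Posz i.+1 + 1) = (- Posz a) * Posz n + (s - Posz b.+1).
  rewrite e -addn1 PoszD; ring.
by rewrite modzMDl.
Qed.

Lemma cong_add1 n (hn : (2 <= n)%N) a b : cong n a b -> cong n (a + 1) b = false.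
Proof.
rewrite /cong => /eqP h.
have -> : a + 1 - b = (a - b) + 1 by ring.
by rewrite -modzDml h add0r modz_small //; apply/andP; split => //; rewrite ltz_nat.
Qed.

Lemma cong_sub1 n (hn : (2 <= n)%N) a b : cong n a b -> cong n (a - 1) b = false.
Proof.
rewrite /cong => /eqP h.
have -> : a - 1 - b = (-1) * Posz n + ((a - b) + (Posz n - 1)) by ring.
rewrite modzMDl -modzDml h add0r modz_small.
  by apply/negP => /eqP e; lia.
by apply/andP; split; lia.
Qed.

Lemma upd_at r (t : tens r) j v : upd t j v j = v.
Proof. by rewrite ffunE eqxx. Qed.

Lemma upd_other r (t : tens r) j v k : k != j -> upd t j v k = t k.
Proof. by rewrite ffunE => /negbTE ->. Qed.

Lemma upd_swap r (t s : tens r) j (d : int) :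
  (upd t j (t j + d) == s) = (upd s j (s j - d) == t).
Proof.
apply/eqP/eqP => [<-|<-]; apply/ffunP => k; rewrite !ffunE eqxx ?addrK ?subrK;
  by case: (k =P j) => // ->.
Qed.

Lemma split3 r (f : 'I_r -> int) (j : 'I_r) :
  \sum_(k < r) f k = \sum_(k < r | (k < j)%N) f k + f j + \sum_(k < r | (j < k)%N) f k.
Proof.
rewrite (bigID (fun k : 'I_r => (k < j)%N)) /= -addrA; congr (_ + _).
rewrite (bigD1 j) ?ltnn //=; congr (_ + _).
apply: eq_bigl => k; rewrite -leqNgt.
case: (ltngtP j k) => h /=.
- by apply/eqP => e; rewrite e ltnn in h.
- by [].
- by apply/negbF/eqP/val_inj.
Qed.

Lemma trE n r (hn : (3 <= n)%N) (i : 'I_n) (t s : tens r) :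
  coef (@psi n r (rho (tGen (gE i))) t) s = coef (gen_act (gE i) s) t.
Proof.
rewrite /= /opcomp coef_apply.
pose d := fun u : tens r => q *
            (\prod_(k < r) q ^ (- (cong n (u k) (idx (ordS i)) : nat)%:Z) *
             \prod_(k < r) q ^ ((cong n (u k) (idx i) : nat)%:Z)).
transitivity (d s * coef (gen_act (gF i) t) s); first exact (diag_sum (gen_act (gF i) t) s d).
rewrite /d {d}.
rewrite coef_gF coef_gE mulr_sumr; apply: eq_big => j.
  rewrite upd_swap; case: (upd s j (s j - 1) =P t) => [<-|]; last by rewrite !andbF.
  by rewrite upd_at.
move=> /andP [cj /eqP es]; subst s.
rewrite !prodq -{1}(expr1z q) -!expfzDr ?qnz //; congr (_ ^ _).
set u := upd t j (t j + 1).
have -> : \sum_(k < r) - (cong n (u k) (idx (ordS i)) : nat)%:Z +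
   \sum_(k < r) (cong n (u k) (idx i) : nat)%:Z = \sum_(k < r) kexp n (idx i) (u k).
  by rewrite -big_split; apply: eq_bigr => k _ /=; rewrite cong_ordS /kexp addrC.
rewrite (split3 _ j) /u upd_at.
have e1 : cong n (t j + 1) (idx i + 1).
  by rewrite /cong (_ : t j + 1 - (idx i + 1) = t j - idx i); [exact: cj | ring].
have kj : kexp n (idx i) (t j + 1) = -1.
  by rewrite /kexp e1 cong_add1 //; apply: ltnW.
have el : \sum_(k < r | (k < j)%N) kexp n (idx i) (upd t j (t j + 1) k) =
          \sum_(k < r | (k < j)%N) kexp n (idx i) (t k).
  apply: eq_bigr => k hk; rewrite upd_other //; apply/eqP => e.
  by rewrite e ltnn in hk.
rewrite el kj sumrN; ring.
Qed.

Lemma upd_swap2 r (t s : tens r) j (d : int) :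
  (upd t j (t j - d) == s) = (upd s j (s j + d) == t).
Proof.
apply/eqP/eqP => [<-|<-]; apply/ffunP => k; rewrite !ffunE eqxx ?addrK ?subrK;
  by case: (k =P j) => // ->.
Qed.

Lemma trF n r (hn : (3 <= n)%N) (i : 'I_n) (t s : tens r) :
  coef (@psi n r (rho (tGen (gF i))) t) s = coef (gen_act (gF i) s) t.
Proof.
rewrite /= /opcomp coef_apply.
pose d := fun u : tens r => q *
            (\prod_(k < r) q ^ ((cong n (u k) (idx (ordS i)) : nat)%:Z) *
             \prod_(k < r) q ^ (- (cong n (u k) (idx i) : nat)%:Z)).
transitivity (d s * coef (gen_act (gE i) t) s); first exact (diag_sum (gen_act (gE i) t) s d).
rewrite /d {d}.
rewrite coef_gF coef_gE mulr_sumr; apply: eq_big => j.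
  rewrite upd_swap2; case: (upd s j (s j + 1) =P t) => [<-|]; last by rewrite !andbF.
  by rewrite upd_at addrK.
move=> /andP [cj /eqP es]; subst s.
rewrite !prodq -{1}(expr1z q) -!expfzDr ?qnz //; congr (_ ^ _).
set u := upd t j (t j - 1).
have -> : \sum_(k < r) (cong n (u k) (idx (ordS i)) : nat)%:Z +
   \sum_(k < r) - (cong n (u k) (idx i) : nat)%:Z = - \sum_(k < r) kexp n (idx i) (u k).
  by rewrite -sumrN -big_split; apply: eq_bigr => k _ /=; rewrite cong_ordS /kexp opprB addrC.
rewrite (split3 _ j) /u upd_at.
have e2 : cong n (t j - 1) (idx i + 1) = false.
  have := cong_sub1 (ltnW hn) cj.
  by rewrite /cong (_ : t j - 1 - 1 - idx i = t j - 1 - (idx i + 1)); [exact: id | ring].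
have kj : kexp n (idx i) (t j - 1) = 1.
  by rewrite /kexp e2 cj.
have el : \sum_(k < r | (j < k)%N) kexp n (idx i) (upd t j (t j - 1) k) =
          \sum_(k < r | (j < k)%N) kexp n (idx i) (t k).
  apply: eq_bigr => k hk; rewrite upd_other //; apply/eqP => e.
  by rewrite e ltnn in hk.
rewrite el kj sumrN; ring.
Qed.

Lemma shift_swap r (t s : tens r) : (shift t (-1) == s) = (shift s 1 == t).
Proof.
apply/eqP/eqP => [<-|<-]; apply/ffunP => k; rewrite !ffunE; ring.
Qed.

Lemma gen_tr n r (hn : (3 <= n)%N) (g : gen n) :
  istr (@psi n r (tGen g)) (@psi n r (rho (tGen g))).
Proof.
move=> t s; case: g => [| |i|i|i|i].
- by rewrite /= !coef_single shift_swap.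
- by rewrite /= !coef_single -shift_swap.
- rewrite /= !coef_single; case: (t =P s) => [->|ne]; rewrite ?eqxx //.
  by case: (s =P t) => // e; case: ne.
- rewrite /= !coef_single; case: (t =P s) => [->|ne]; rewrite ?eqxx //.
  by case: (s =P t) => // e; case: ne.
- exact: trE.
- exact: trF.
Qed.

Lemma sum_apply r (Y : op r) (v : vec r) (h : tens r -> F) :
  \sum_(p' <- apply Y v) p'.1 * h p'.2 =
  \sum_(p <- v) p.1 * \sum_(p' <- Y p.2) p'.1 * h p'.2.
Proof.
elim: v => [|p v IH]; first by rewrite /apply /= !big_nil.
rewrite /apply /= big_cat big_cons -IH /vscale big_map mulr_sumr.
by congr (_ + _); apply: eq_bigr => p' _ /=; rewrite mulrA.
Qed.

Lemma coef_assoc r (X Y Z : op r) t s :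
  coef (opcomp (opcomp X Y) Z t) s = coef (opcomp X (opcomp Y Z) t) s.
Proof.
rewrite /opcomp coef_apply [RHS]coef_apply (sum_apply Y (Z t) (fun u => coef (X u) s)).
by apply: eq_bigr => p _; rewrite coef_apply.
Qed.



Lemma psi_tr n r (hn : (3 <= n)%N) (x : term n) : istr (@psi n r x) (@psi n r (rho x)).
Proof.
elim: x => [g| |a IHa b IHb|c a IHa|a IHa b IHb].
- exact: gen_tr.
- move=> t s /=; rewrite !coef_single.
  by case: (t =P s) => [->|ne]; rewrite ?eqxx //; case: (s =P t) => // e; case: ne.
- by move=> t s /=; rewrite !coef_cat IHa IHb.
- by move=> t s /=; rewrite !coef_scale IHa.
- exact: istr_comp.
Qed.

Local Close Scope ring_scope.
Theorem lemma3p8 (n r : nat) (hn : 3 <= n) (hr : 1 <= r)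
  (lam mu : 'I_n -> nat)
  (hlam : \sum_(i < n) lam i = r) (hmu : \sum_(i < n) mu i = r)
  (x : term n) :
  @op_nonzero r (@cut n r lam x mu) ->
  @op_nonzero r (@opcomp r (@cut n r lam x mu) (@cut n r mu (rho x) lam)) /\
  @op_nonzero r (@opcomp r (@cut n r mu (rho x) lam) (@cut n r lam x mu)).
Proof.
move=> [t0 [s0 h]].
set A := cut lam x mu; set B := cut mu (rho x) lam.
have hAB : istr A B.
  move=> t s; rewrite /A /B /cut -coef_assoc.
  exact: (istr_comp (istr_one_w lam) (istr_comp (psi_tr (r:=r) hn x) (istr_one_w mu)) t s).
split.
- exists s0, s0; rewrite /opcomp coef_apply.
  rewrite (eq_bigr (fun p => (p.1 * coef (B s0) p.2)%R)); last by move=> p _; rewrite hAB.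
  by apply: (sum_nonzero (s := t0)); rewrite hAB.
- exists t0, t0; rewrite /opcomp coef_apply.
  rewrite (eq_bigr (fun p => (p.1 * coef (A t0) p.2)%R)); last by move=> p _; rewrite -hAB.
  exact: (sum_nonzero (s := s0)).
Qed.
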